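(* Assume the setting below and that the matrix $\Phi$ is positive definite. Then: (i) $\mathcal V_\Phi:=(\mathrm{Id}+\Phi^{-1}\mathcal B)^{-1}$ is single-valued on $\mathbb{R}^{N(3+2M)}$. (ii) For every $\omega^k=(\beta^k,\psi^k,\sigma^k,z^k,\lambda^k)\in\Omega\times\mathbb{R}^N\times\mathbb{R}^N\times\mathbb{R}^{NM}\times\mathbb{R}^{NM}_+$, the point $\omega^{k+1}$ produced by the iteration (IT) equals $\mathcal V_\Phi\circ\mathcal U_\Phi(\omega^k)$, where $\mathcal U_\Phi:=\mathrm{Id}-\Phi^{-1}\mathcal A$; equivalently, $0\in\mathcal A(\omega^k)+\mathcal B(\omega^{k+1})+\Phi(\omega^{k+1}-\omega^k)$. (iii) A point $\omega^*$ is a fixed point of $\mathcal V_\Phi\circ\mathcal U_\Phi$ (equivalently, a steady state of (IT)) if and only if $0\in(\mathcal A+\mathcal B)(\omega^* )$. (iv) If $\omega^*=(\beta^*,\psi^*,\sigma^*,z^*,\lambda^* )$ satisfies $0\in(\mathcal A+\mathcal B)(\omega^* )$, then $\sigma^*=\frac1N(\mathbf 1^\top\beta^* )\mathbf 1_N$, $\lambda^*=\mathbf 1_N\otimes\gamma_2$ for some $\gamma_2\in\mathbb{R}^M_+$, and $\beta^*$ is a v-GNE of the game, i.e. $\beta^*\in K$ and $(\beta-\beta^* )^\top F(\beta^* )\ge0$ for all $\beta\in K$.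
   Context: Game data: integers $N\ge2$ (aggregators) and $H\ge1$ (lines), $M:=2N+2H$. Reals $r\ge0$, $\alpha>0$, $a_n,b_n>0$, bid bounds $\underline\beta<\bar\beta$, load capacities $\hat x\in\mathbb{R}^N$, line capacities $\hat f\in\mathbb{R}^H_+$, net loads $e\in\mathbb{R}^N$, and a distribution-factor matrix $\Pi\in\mathbb{R}^{H\times N}$. Let $A:=I_N-\frac1N\mathbf 1\mathbf 1^\top$, $c:=\frac rN\mathbf 1_N$, $$\tilde A:=\begin{bmatrix}A\\-A\\-\Pi A\\\Pi A\end{bmatrix}\in\mathbb{R}^{M\times N},\qquad d:=\begin{bmatrix}\hat x-c\\c\\\hat f-\Pi(e-c)\\\hat f+\Pi(e-c)\end{bmatrix}\in\mathbb{R}^M.$$ Let $u_n$ be the $n$-th standard basis vector of $\mathbb{R}^N$, and define $$d_n:=\tfrac1N\big(-c;\ c;\ \hat f+\Pi c;\ \hat f-\Pi c\big)+\big(\hat x_nu_n;\ 0;\ -e_n\Pi u_n;\ e_n\Pi u_n\big),$$ so that $\sum_n d_n=d$. Let $\Omega:=[\underline\beta,\bar\beta]^N$ and $K:=\{\beta\in\Omega:\tilde A\beta\le d\}$. Standing assumption: some $\beta\in\Omega$ satisfies $\tilde A\beta<d$ componentwise. With $C_n'(x)=2a_nx+b_n$, the map $F:\mathbb{R}^N\to\mathbb{R}^N$ is defined by $$F_n(\beta)=\tfrac{N-1}{N}C_n'\big(\tfrac{r-\mathbf 1^\top\beta}{N}+\beta_n\big)+\tfrac{(\mathbf 1^\top\beta-r)(N-2)+N\beta_n}{\alpha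 N^2}$$ (the pseudo-gradient of the aggregators' costs). A v-GNE is a solution of the variational inequality $\mathrm{VI}(K,F)$. The map $\hat F:\mathbb{R}^N\times\mathbb{R}^N\to\mathbb{R}^N$ is defined by $$\hat F_n(\beta,\sigma)=\tfrac{N-1}{N}C_n'\big(\tfrac{r-N\sigma_n}{N}+\beta_n\big)+\tfrac{(N\sigma_n-r)(N-2)+N\beta_n}{\alpha N^2},$$ so that $\hat F(\beta,\frac1N\mathbf 1^\top\beta\,\mathbf 1)=F(\beta)$. Communication: $G$ is a connected undirected graph on $\{1,\dots,N\}$ with positive weights and weighted Laplacian $L$; $L_\sigma:=L$ and $L_\lambda:=L\otimes I_M$. Let $\tilde A_n\in\mathbb{R}^M$ be the $n$-th column of $\tilde A$, $\bar A:=\mathrm{blkdiag}(\tilde A_1,\dots,\tilde A_N)\in\mathbb{R}^{NM\times N}$, and $\bar d:=\mathrm{col}(d_1,\dots,d_N)\in\mathbb{R}^{NM}$. Parameters: $\kappa>0$; $\tau=\mathrm{diag}(\tau_n)$, $\upsilon=\mathrm{diag}(\upsilon_n)$, $\rho=\mathrm{diag}(\rho_n)$ in $\mathbb{R}^{N\times N}$; $\delta=\mathrm{blkdiag}(\delta_nI_M)$, $\eta=\mathrm{blkdiag}(\eta_nI_M)$ in $\mathbb{R}^{NM\times NM}$; all $\tau_n,\upsilon_n,\rho_n,\delta_n,\eta_n>0$. Iteration (IT): $$\begin{aligned} \beta^{k+1}&=\mathrm{proj}_\Omega[\beta^k-\tau(\hat F(\beta^k,\sigma^k)+\bar A^\top\lambda^k)],\\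 \psi^{k+1}&=\psi^k+\upsilon L_\sigma\sigma^k,\\ \sigma^{k+1}&=\sigma^k+\rho\big(\kappa(\beta^k-\sigma^k)-L_\sigma(2\psi^{k+1}-\psi^k)\big),\\ z^{k+1}&=z^k+\delta L_\lambda\lambda^k,\\ \lambda^{k+1}&=\mathrm{proj}_{\mathbb{R}^{NM}_+}\big[\lambda^k-\eta\big(L_\lambda\lambda^k+\bar d-\bar A(2\beta^{k+1}-\beta^k)+L_\lambda(2z^{k+1}-z^k)\big)\big]. \end{aligned}$$ For $\omega=(\beta,\psi,\sigma,z,\lambda)$: $$\mathcal A(\omega):=\big(\hat F(\beta,\sigma),\,0,\,\kappa(\sigma-\beta),\,0,\,\bar d+L_\lambda\lambda\big),$$ $$\mathcal B(\omega):=\big(\mathrm N_\Omega(\beta)+\bar A^\top\lambda,\ -L_\sigma\sigma,\ L_\sigma\psi,\ -L_\lambda\lambda,\ \mathrm N_{\mathbb{R}^{NM}_+}(\lambda)-\bar A\beta+L_\lambda z\big),$$ where $\mathrm N_S$ is the normal cone of $S$ (empty outside $S$). Finally, $$\Phi:=\begin{bmatrix}\tau^{-1}&0&0&0&-\bar A^\top\\0&\upsilon^{-1}&L_\sigma&0&0\\0&L_\sigma&\rho^{-1}&0&0\\0&0&0&\delta^{-1}&L_\lambda\\-\bar A&0&0&L_\lambda&\eta^{-1}\end{bmatrix}.$$ *)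

(* Defs.v *)
From HB Require Import structures.
From mathcomp Require Import all_boot all_order all_algebra.
From mathcomp Require Import mxtens.
From mathcomp Require Import reals.
Set Implicit Arguments.
Unset Strict Implicit.
Unset Printing Implicit Defensive.
Import Order.TTheory GRing.Theory Num.Theory.
Local Open Scope ring_scope.

(* Kronecker product  A (x) B  (mxtens: index (i,j) |-> i * p + j). *)
Notation kron := tensmx.

Section Setting.
Variable R : realType.

Definition normal_cone {n} (S : 'cV[R]_n -> Prop) (x v : 'cV[R]_n) : Prop :=
  S x /\ forall y, S y -> (v^T *m (y - x)) 0 0 <= 0.

Definition sqnorm {n} (v : 'cV[R]_n) : R := \sum_i (v i 0) ^+ 2.

Definition is_proj {n} (S : 'cV[R]_n -> Prop) (x y : 'cV[R]_n) : Prop :=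
  S y /\ forall z, S z -> sqnorm (x - y) <= sqnorm (x - z).

Definition nonneg {n} (v : 'cV[R]_n) : Prop := forall i, 0 <= v i 0.

Definition diagv {n} (f : 'I_n -> R) : 'M[R]_n := diag_mx (\row_i f i).

(* weighted Laplacian of the graph with weights w (w i j > 0 iff edge {i,j}) *)
Definition laplacian {n} (w : 'I_n -> 'I_n -> R) : 'M[R]_n :=
  \matrix_(i, j) (if i == j then \sum_(k | k != i) w i k else - w i j).

Definition connected_weighted_graph {n} (w : 'I_n -> 'I_n -> R) : Prop :=
  [/\ forall i j, w i j = w j i,
      forall i j, 0 <= w i j,
      forall i, w i i = 0 &
      forall i j, connect (fun k l : 'I_n => 0 < w k l) i j].

Definition posdef {n} (P : 'M[R]_n) : Prop :=
  forall x : 'cV[R]_n, x != 0 -> 0 < (x^T *m P *m x) 0 0.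

Record data (N H : nat) := Data {
  rD : R; alphaD : R;
  aD : 'I_N -> R; bD : 'I_N -> R;
  bloD : R; bhiD : R;                 (* bid bounds *)
  xhatD : 'cV[R]_N;                  (* load capacities *)
  fhatD : 'cV[R]_H;                  (* line capacities *)
  eD : 'cV[R]_N;                     (* net loads *)
  PiD : 'M[R]_(H, N);                (* distribution factors *)
  wD : 'I_N -> 'I_N -> R;            (* communication graph weights *)
  kappaD : R;
  tauD : 'I_N -> R; upsD : 'I_N -> R; rhoD : 'I_N -> R;
  deltaD : 'I_N -> R; etaD : 'I_N -> R }.

Variables (N H : nat) (g : data N H).

(* M = 2N + 2H, written so that the block structure is definitional *)
Definition M : nat := (N + (N + (H + H)))%N.

Definition onev : 'cV[R]_N := const_mx 1.
Definition Am : 'M[R]_N := 1%:M - (N%:R)^-1 *: (onev *m onev^T).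
Definition cv : 'cV[R]_N := (rD g / N%:R) *: onev.

Definition Atil : 'M[R]_(M, N) :=
  col_mx Am (col_mx (- Am) (col_mx (- (PiD g *m Am)) (PiD g *m Am))).

Definition dvec : 'cV[R]_M :=
  col_mx (xhatD g - cv)
    (col_mx cv
      (col_mx (fhatD g - PiD g *m (eD g - cv)) (fhatD g + PiD g *m (eD g - cv)))).

Definition uvec (n : 'I_N) : 'cV[R]_N := delta_mx n 0.

Definition dloc (n : 'I_N) : 'cV[R]_M :=
  (N%:R)^-1 *: col_mx (- cv)
      (col_mx cv (col_mx (fhatD g + PiD g *m cv) (fhatD g - PiD g *m cv)))
  + col_mx (xhatD g n 0 *: uvec n)
      (col_mx 0 (col_mx (- (eD g n 0 *: (PiD g *m uvec n)))
                        (eD g n 0 *: (PiD g *m uvec n)))).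

Definition Omega (be : 'cV[R]_N) : Prop :=
  forall i, bloD g <= be i 0 <= bhiD g.

Definition Kset (be : 'cV[R]_N) : Prop :=
  Omega be /\ forall j, (Atil *m be) j 0 <= dvec j 0.

Definition slater : Prop :=
  exists be, Omega be /\ forall j, (Atil *m be) j 0 < dvec j 0.

Definition Cp (n : 'I_N) (x : R) : R := 2 * aD g n * x + bD g n.

Definition Fmap (be : 'cV[R]_N) : 'cV[R]_N :=
  \col_n ((N%:R - 1) / N%:R * Cp n ((rD g - \sum_i be i 0) / N%:R + be n 0)
          + ((\sum_i be i 0 - rD g) * (N%:R - 2) + N%:R * be n 0)
            / (alphaD g * N%:R ^+ 2)).

Definition Fhat (be si : 'cV[R]_N) : 'cV[R]_N :=
  \col_n ((N%:R - 1) / N%:R * Cp n ((rD g - N%:R * si n 0) / N%:R + be n 0)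
          + ((N%:R * si n 0 - rD g) * (N%:R - 2) + N%:R * be n 0)
            / (alphaD g * N%:R ^+ 2)).

Definition vGNE (bs : 'cV[R]_N) : Prop :=
  Kset bs /\ forall be, Kset be -> 0 <= ((be - bs)^T *m Fmap bs) 0 0.

Definition Lsig : 'M[R]_N := laplacian (wD g).
Definition Llam : 'M[R]_(N * M) := kron Lsig (1%:M : 'M[R]_M).

(* bar A = blkdiag(tilde A_1, ..., tilde A_N) *)
Definition Abar : 'M[R]_(N * M, N) :=
  \matrix_(k, n) (if (mxtens_unindex k).1 == n
                  then Atil (mxtens_unindex k).2 n else 0).

(* bar d = col(d_1, ..., d_N) *)
Definition dbar : 'cV[R]_(N * M) :=
  \col_k dloc (mxtens_unindex k).1 (mxtens_unindex k).2 0.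

Definition taum : 'M[R]_N := diagv (tauD g).
Definition upsm : 'M[R]_N := diagv (upsD g).
Definition rhom : 'M[R]_N := diagv (rhoD g).
Definition deltam : 'M[R]_(N * M) := kron (diagv (deltaD g)) (1%:M : 'M[R]_M).
Definition etam : 'M[R]_(N * M) := kron (diagv (etaD g)) (1%:M : 'M[R]_M).

Definition Dim : nat := (N + N + N + N * M + N * M)%N.

Definition mkom (be ps si : 'cV[R]_N) (z la : 'cV[R]_(N * M)) : 'cV[R]_Dim :=
  col_mx (col_mx (col_mx (col_mx be ps) si) z) la.

Definition om_beta (om : 'cV[R]_Dim) : 'cV[R]_N :=
  usubmx (usubmx (usubmx (usubmx om))).
Definition om_psi (om : 'cV[R]_Dim) : 'cV[R]_N :=
  dsubmx (usubmx (usubmx (usubmx om))).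
Definition om_sigma (om : 'cV[R]_Dim) : 'cV[R]_N :=
  dsubmx (usubmx (usubmx om)).
Definition om_z (om : 'cV[R]_Dim) : 'cV[R]_(N * M) := dsubmx (usubmx om).
Definition om_lambda (om : 'cV[R]_Dim) : 'cV[R]_(N * M) := dsubmx om.

Definition Phi : 'M[R]_Dim :=
  block_mx
    (block_mx
       (block_mx (block_mx (invmx taum) 0 0 (invmx upsm))
                 (col_mx 0 Lsig) (row_mx 0 Lsig) (invmx rhom))
       0 0 (invmx deltam))
    (col_mx (col_mx (col_mx (- Abar^T) 0) 0) Llam)
    (row_mx (row_mx (row_mx (- Abar) 0) 0) Llam)
    (invmx etam).

Definition Aop (om : 'cV[R]_Dim) : 'cV[R]_Dim :=
  let be := om_beta om in let si := om_sigma om in let la := om_lambda om in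
  mkom (Fhat be si) 0 (kappaD g *: (si - be)) 0 (dbar + Llam *m la).

(* set-valued operator B:  Bop om v  <->  v \in B(om) *)
Definition Bop (om v : 'cV[R]_Dim) : Prop :=
  let be := om_beta om in let ps := om_psi om in let si := om_sigma om in
  let z := om_z om in let la := om_lambda om in
  exists nb nl,
    normal_cone Omega be nb /\ normal_cone nonneg la nl /\
    v = mkom (nb + Abar^T *m la) (- (Lsig *m si)) (Lsig *m ps)
             (- (Llam *m la)) (nl - Abar *m be + Llam *m z).

Definition zero_in_AB (om : 'cV[R]_Dim) : Prop :=
  exists v, Bop om v /\ Aop om + v = 0.

Definition Uop (om : 'cV[R]_Dim) : 'cV[R]_Dim := om - invmx Phi *m Aop om.

(* V_rel x y  <->  y \in V_Phi(x) = (Id + Phi^{-1} B)^{-1}(x),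
   i.e. x \in y + Phi^{-1} B(y) *)
Definition Vrel (x y : 'cV[R]_Dim) : Prop :=
  exists v, Bop y v /\ x = y + invmx Phi *m v.

Definition IT (om om' : 'cV[R]_Dim) : Prop :=
  let be := om_beta om in let ps := om_psi om in let si := om_sigma om in
  let z := om_z om in let la := om_lambda om in
  let be' := om_beta om' in let ps' := om_psi om' in let si' := om_sigma om' in
  let z' := om_z om' in let la' := om_lambda om' in
  [/\ is_proj Omega (be - taum *m (Fhat be si + Abar^T *m la)) be',
      ps' = ps + upsm *m (Lsig *m si),
      si' = si + rhom *m (kappaD g *: (be - si) - Lsig *m (2%:R *: ps' - ps)),
      z' = z + deltam *m (Llam *m la) &
      is_proj nonneg
        (la - etam *m (Llam *m la + dbar - Abar *m (2%:R *: be' - be)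
                       + Llam *m (2%:R *: z' - z))) la'].

End Setting.

(* Main.v *)
Require Import Defs.
From HB Require Import structures.
From mathcomp Require Import all_boot all_order all_algebra.
From mathcomp Require Import mxtens.
From mathcomp Require Import reals.
From mathcomp Require Import ring lra.
Import Order.TTheory GRing.Theory Num.Theory.
Local Open Scope ring_scope.
Set Implicit Arguments.
Unset Strict Implicit.
Unset Printing Implicit Defensive.

Section Gen.
Variable R : realType.

Lemma diagv_mulE n (f : 'I_n -> R) (v : 'cV[R]_n) i :
  (diagv f *m v) i 0 = f i * v i 0.
Proof. by rewrite /diagv mul_diag_mx !mxE. Qed.

Lemma diagvM n (f h : 'I_n -> R) :
  diagv f *m diagv h = diagv (fun i => f i * h i).
Proof.
apply/matrixP=> i j; rewrite /diagv mul_diag_mx !mxE.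
by case: eqP => _; rewrite ?mulr0n ?mulr0 ?mulr1n.
Qed.

Lemma diagv1 n : diagv (fun _ : 'I_n => (1 : R)) = 1%:M.
Proof. by apply/matrixP=> i j; rewrite /diagv !mxE. Qed.

Lemma diagv_inv n (f : 'I_n -> R) : (forall i, f i != 0) ->
  diagv f \in unitmx /\ invmx (diagv f) = diagv (fun i => (f i)^-1).
Proof.
move=> hf.
have e : diagv f *m diagv (fun i => (f i)^-1) = 1%:M.
  by rewrite diagvM -diagv1; apply/matrixP=> i j; rewrite /diagv !mxE mulfV.
have [u _] := mulmx1_unit e; split => //.
by rewrite -[invmx _]mulmx1 -e mulmxA mulVmx // mul1mx.
Qed.

Lemma kron_diagv n m (f : 'I_n -> R) :
  tensmx (diagv f) (1%:M : 'M[R]_m) = diagv (fun k => f (mxtens_unindex k).1).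
Proof.
apply/matrixP=> i j; rewrite -(mxtens_unindexK i) -(mxtens_unindexK j).
move: (mxtens_unindex i) (mxtens_unindex j) => [a b] [c d].
rewrite tensmxE /diagv !mxE mxtens_indexK /=.
rewrite (inj_eq (can_inj (@mxtens_indexK _ _))) xpair_eqE.
by case: (a == c); case: (b == d); rewrite ?mulr0n ?mulr1n ?mulr1 ?mulr0.
Qed.

Lemma upd_entry n (y : 'cV[R]_n) i c k :
  (y + (c - y i 0) *: delta_mx i 0) k 0 = if k == i then c else y k 0.
Proof.
rewrite !mxE eqxx andbT; case: eqVneq => [->|_]; rewrite ?mulr1 ?mulr0 ?addr0 //.
by rewrite addrC subrK.
Qed.

Definition coordS n (P : R -> Prop) (x : 'cV[R]_n) := forall i, P (x i 0).

Lemma dot_sum n (v z : 'cV[R]_n) : (v^T *m z) 0 0 = \sum_i v i 0 * z i 0.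
Proof. by rewrite !mxE; apply: eq_bigr => i _; rewrite !mxE. Qed.

Lemma nc_coord n (P : R -> Prop) (y v : 'cV[R]_n) :
  normal_cone (coordS P) y v <->
  coordS P y /\ forall i t, P t -> v i 0 * (t - y i 0) <= 0.
Proof.
split.
- case=> Py H; split => // i t Pt.
  pose z := y + (t - y i 0) *: delta_mx i 0.
  have Pz : coordS P z.
    by move=> k; rewrite /z upd_entry; case: eqP => _; [apply: Pt|apply: Py].
  have := H z Pz; rewrite dot_sum (bigD1 i) //= big1 ?addr0.
    by rewrite [(z - y) i 0]mxE [(- y) i 0]mxE /z upd_entry eqxx.
  by move=> k nk; rewrite [(z - y) k 0]mxE [(- y) k 0]mxE /z upd_entry (negPf nk) subrr mulr0.
- case=> Py H; split => // z Pz; rewrite dot_sum.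
  by apply: sumr_le0 => i _; rewrite !mxE; apply: H.
Qed.

Section Clamp.
Variable P : R -> Prop.
Variable cl : R -> R.
Hypothesis HclP : forall w, P (cl w).
Hypothesis Hnc : forall w y, P y ->
  ((forall t, P t -> (w - y) * (t - y) <= 0) <-> y = cl w).
Hypothesis Hmin1 : forall w t, P t -> (w - cl w) ^+ 2 <= (w - t) ^+ 2.
Hypothesis Hmin2 : forall w t, P t -> (w - t) ^+ 2 <= (w - cl w) ^+ 2 -> t = cl w.

Lemma proj_coord n (w y : 'cV[R]_n) :
  is_proj (coordS P) w y <-> forall i, y i 0 = cl (w i 0).
Proof.
split.
- case=> Py H i; apply: Hmin2 => //.
  pose z := y + (cl (w i 0) - y i 0) *: delta_mx i 0.
  have Pz : coordS P z.
    by move=> k; rewrite /z upd_entry; case: eqP => _; [apply: HclP|apply: Py].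
  have := H z Pz; rewrite /sqnorm (bigD1 i) //= [X in _ <= X](bigD1 i) //=.
  have -> : \sum_(k < n | k != i) (w - z) k 0 ^+ 2 = \sum_(k < n | k != i) (w - y) k 0 ^+ 2.
    by apply: eq_bigr => k nk; rewrite [(w - z) k 0]mxE [(- z) k 0]mxE /z upd_entry (negPf nk) !mxE.
  by rewrite lerD2r [(w - z) i 0]mxE [(- z) i 0]mxE /z upd_entry eqxx !mxE.
- move=> H; split; first by move=> i; rewrite H.
  move=> z Pz; rewrite /sqnorm; apply: ler_sum => i _.
  by rewrite !mxE H; apply: Hmin1.
Qed.

Lemma nc_diag n (f : 'I_n -> R) (w y : 'cV[R]_n) : (forall i, 0 < f i) ->
  normal_cone (coordS P) y (diagv f *m (w - y)) <-> forall i, y i 0 = cl (w i 0).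
Proof.
move=> fp; rewrite nc_coord; split.
- case=> Py H i; apply/(Hnc _ (Py i)) => t Pt.
  have := H i t Pt; rewrite diagv_mulE !mxE -mulrA pmulr_rle0 //.
- move=> H; split; first by move=> i; rewrite H.
  move=> i t Pt; rewrite diagv_mulE !mxE -mulrA pmulr_rle0 //.
  by have /(Hnc (w i 0)) := HclP (w i 0); rewrite -H => -[_ /(_ erefl)]; apply.
Qed.

Lemma clamp_exists n (w : 'cV[R]_n) : exists y : 'cV[R]_n, forall i, y i 0 = cl (w i 0).
Proof. by exists (\col_i cl (w i 0)) => i; rewrite mxE. Qed.

End Clamp.
End Gen.

Section S. Variable R : realType.
Definition clampB (lo hi w : R) := if w < lo then lo else if hi < w then hi else w.
Definition PB (lo hi t : R) : Prop := lo <= t <= hi.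

Lemma clB_P lo hi w : lo <= hi -> PB lo hi (clampB lo hi w).
Proof. move=> lohi; rewrite /PB /clampB; case: ltP => h1; [|case: ltP => h2]; apply/andP; split; lra. Qed.

Lemma clB_nc lo hi w y : lo <= hi -> PB lo hi y -> ((forall t, PB lo hi t -> (w - y) * (t - y) <= 0) <-> y = clampB lo hi w).
Proof.
move=> lohi; rewrite /PB /clampB => /andP[y1 y2]; split.
- move=> H; case: ltP => h1; [|case: ltP => h2].
  + have := H lo; rewrite lexx lohi => /(_ isT); nra.
  + have := H hi; rewrite lexx lohi => /(_ isT); nra.
  + have := H w; rewrite h1 h2 => /(_ isT); nra.
- move=> -> t /andP[t1 t2]; case: ltP => h1; [|case: ltP => h2]; nra.
Qed.

Lemma clB_min1 lo hi w t : PB lo hi t -> (w - clampB lo hi w) ^+ 2 <= (w - t) ^+ 2.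
Proof. have sq := sqr_ge0 (w - t); rewrite expr2 in sq. rewrite /PB /clampB !expr2 => /andP[t1 t2]; case: ltP => h1; [|case: ltP => h2]; nra. Qed.

Lemma clB_min2 lo hi w t : PB lo hi t -> (w - t) ^+ 2 <= (w - clampB lo hi w) ^+ 2 -> t = clampB lo hi w.
Proof. have sq := sqr_ge0 (w - t); rewrite expr2 in sq. rewrite /PB /clampB !expr2 => /andP[t1 t2]; case: ltP => h1; [|case: ltP => h2]; nra. Qed.

Definition clamp0 (w : R) := if w < 0 then 0 else w.
Definition P0 (t : R) : Prop := 0 <= t.
Lemma cl0_P w : P0 (clamp0 w).
Proof. rewrite /P0 /clamp0; case: ltP => h1; lra. Qed.
Lemma cl0_nc w y : P0 y -> ((forall t, P0 t -> (w - y) * (t - y) <= 0) <-> y = clamp0 w).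
Proof.
rewrite /P0 /clamp0 => y1; split.
- move=> H; case: ltP => h1.
  + have := H 0; rewrite lexx => /(_ isT); nra.
  + have := H w; rewrite h1 => /(_ isT); nra.
- move=> -> t t1; case: ltP => h1; nra.
Qed.
Lemma cl0_min1 w t : P0 t -> (w - clamp0 w) ^+ 2 <= (w - t) ^+ 2.
Proof. have sq := sqr_ge0 (w - t); rewrite expr2 in sq. rewrite /P0 /clamp0 !expr2 => t1; case: ltP => h1; nra. Qed.
Lemma cl0_min2 w t : P0 t -> (w - t) ^+ 2 <= (w - clamp0 w) ^+ 2 -> t = clamp0 w.
Proof. have sq := sqr_ge0 (w - t); rewrite expr2 in sq. rewrite /P0 /clamp0 !expr2 => t1; case: ltP => h1; nra. Qed.
End S.

Section Main.
Variables (R : realType) (N H : nat) (g : data R N H).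
Implicit Types (be ps si a b c : 'cV[R]_N) (z la d e : 'cV[R]_(N * M N H)).

Lemma om_mkom be ps si z la :
  [/\ om_beta (mkom be ps si z la) = be, om_psi (mkom be ps si z la) = ps,
      om_sigma (mkom be ps si z la) = si, om_z (mkom be ps si z la) = z &
      om_lambda (mkom be ps si z la) = la].
Proof. by rewrite /om_beta /om_psi /om_sigma /om_z /om_lambda /mkom !col_mxKu !col_mxKd. Qed.

Lemma mkom_split (om : 'cV[R]_(Dim N H)) :
  om = mkom (om_beta om) (om_psi om) (om_sigma om) (om_z om) (om_lambda om).
Proof. by rewrite /om_beta /om_psi /om_sigma /om_z /om_lambda /mkom !vsubmxK. Qed.

Lemma mkom_eq a b c z la a' b' c' z' la' :
  mkom a b c z la = mkom a' b' c' z' la' <-> [/\ a = a', b = b', c = c', z = z' & la = la'].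
Proof.
split; last by case=> -> -> -> -> ->.
rewrite /mkom => /eq_col_mx[/eq_col_mx[/eq_col_mx[/eq_col_mx[]]]]; by [].
Qed.

Lemma mkomD a b c z la a' b' c' z' la' :
  mkom a b c z la + mkom a' b' c' z' la' = mkom (a + a') (b + b') (c + c') (z + z') (la + la').
Proof. by rewrite /mkom !add_col_mx. Qed.

Lemma mkomN a b c z la : - mkom a b c z la = mkom (- a) (- b) (- c) (- z) (- la).
Proof. by rewrite /mkom !opp_col_mx. Qed.

Lemma mkomB a b c z la a' b' c' z' la' :
  mkom a b c z la - mkom a' b' c' z' la' = mkom (a - a') (b - b') (c - c') (z - z') (la - la').
Proof. by rewrite mkomN mkomD. Qed.

Lemma Phi_mkom a b c d e :
  Phi g *m mkom a b c d e =
  mkom (invmx (taum g) *m a - (Abar g)^T *m e) (invmx (upsm g) *m b + Lsig g *m c)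
       (Lsig g *m b + invmx (rhom g) *m c) (invmx (deltam g) *m d + Llam g *m e)
       (- (Abar g *m a) + Llam g *m d + invmx (etam g) *m e).
Proof.
rewrite /Phi /mkom !mul_block_col !mul_row_col !mul_col_mx !mul0mx ?mulmx0 !addr0 ?add0r.
rewrite !add_col_mx ?addr0 ?add0r ?mulNmx.
by [].
Qed.

Hypothesis tau_pos : forall n, 0 < tauD g n.
Hypothesis ups_pos : forall n, 0 < upsD g n.
Hypothesis rho_pos : forall n, 0 < rhoD g n.
Hypothesis delta_pos : forall n, 0 < deltaD g n.
Hypothesis eta_pos : forall n, 0 < etaD g n.

Lemma tauU : taum g \in unitmx.
Proof. by case: (diagv_inv (f := tauD g)) => // i; rewrite gt_eqF. Qed.
Lemma upsU : upsm g \in unitmx.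
Proof. by case: (diagv_inv (f := upsD g)) => // i; rewrite gt_eqF. Qed.
Lemma rhoU : rhom g \in unitmx.
Proof. by case: (diagv_inv (f := rhoD g)) => // i; rewrite gt_eqF. Qed.
Lemma deltaU : deltam g \in unitmx.
Proof. by rewrite /deltam kron_diagv; case: (diagv_inv (f := fun k : 'I_(N * M N H) => deltaD g (mxtens_unindex k).1)) => // i; rewrite gt_eqF. Qed.
Lemma etaU : etam g \in unitmx.
Proof. by rewrite /etam kron_diagv; case: (diagv_inv (f := fun k : 'I_(N * M N H) => etaD g (mxtens_unindex k).1)) => // i; rewrite gt_eqF. Qed.

Lemma unit_eq n (D : 'M[R]_n) (x y c : 'cV[R]_n) : D \in unitmx ->
  invmx D *m (x - y) + c = 0 <-> y = x + D *m c.
Proof.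
move=> u; split=> [h|->].
  have := congr1 (mulmx D) h; rewrite mulmxDr mulmxA mulmxV // mul1mx mulmx0.
  by move/eqP; rewrite addrAC subr_eq0 => /eqP <-.
by rewrite opprD addNKr mulmxN mulmxA mulVmx // mul1mx addNr.
Qed.

Lemma eq_shift m n (X Y W : 'M[R]_(m, n)) : X - Y = W -> forall Z, (X = Z + Y <-> Z = W).
Proof. by move=> <- Z; split=> [->|->]; rewrite ?addrK ?subrK. Qed.

Lemma eq_sub0 m n (X Y W : 'M[R]_(m, n)) : X - Y = W -> (X = Y <-> W = 0).
Proof. by move=> <-; split=> [->|/eqP]; rewrite ?subrr // subr_eq0 => /eqP. Qed.

Ltac mxdist := repeat first [rewrite mulmxDr | rewrite mulmxBr | rewrite mulmxN | rewrite -scalemxAr].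
Ltac mxlin := apply/matrixP => i j; rewrite !mxE; lra.

Lemma core xb xp xs xz xl yb yp ys yz yl ab ap as_ az al :
  Bop g (mkom yb yp ys yz yl) (Phi g *m (mkom xb xp xs xz xl - mkom yb yp ys yz yl)
                                 - mkom ab ap as_ az al) <->
  [/\ normal_cone (Omega g) yb
        (invmx (taum g) *m ((xb - taum g *m (ab + (Abar g)^T *m xl)) - yb)),
      yp = xp + upsm g *m (Lsig g *m xs - ap),
      ys = xs - rhom g *m (as_ + Lsig g *m (2%:R *: yp - xp)),
      yz = xz + deltam g *m (Llam g *m xl - az) &
      normal_cone (@nonneg R _) yl
        (invmx (etam g) *m ((xl + etam g *m (Abar g *m (2%:R *: yb - xb)
             - Llam g *m (2%:R *: yz - xz) - al)) - yl))].
Proof.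
rewrite mkomB Phi_mkom mkomB /Bop.
case: (om_mkom yb yp ys yz yl) => -> -> -> -> ->.
have e1 : invmx (taum g) *m (xb - yb) - (Abar g)^T *m (xl - yl) - ab - (Abar g)^T *m yl
   = invmx (taum g) *m ((xb - taum g *m (ab + (Abar g)^T *m xl)) - yb).
  rewrite !mulmxBr !mulmxDr !mulmxA mulVmx ?tauU // !mul1mx; mxlin.
have e2 : invmx (upsm g) *m (xp - yp) + Lsig g *m (xs - ys) - ap - - (Lsig g *m ys)
   = invmx (upsm g) *m (xp - yp) + (Lsig g *m xs - ap).
  rewrite !mulmxBr; mxlin.
have e3 : Lsig g *m (xp - yp) + invmx (rhom g) *m (xs - ys) - as_ - Lsig g *m yp
   = invmx (rhom g) *m (xs - ys) + - (as_ + Lsig g *m (2%:R *: yp - xp)).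
  rewrite ?mulmxBr ?mulmxDr -?scalemxAr; mxlin.
have e4 : invmx (deltam g) *m (xz - yz) + Llam g *m (xl - yl) - az - - (Llam g *m yl)
   = invmx (deltam g) *m (xz - yz) + (Llam g *m xl - az).
  rewrite !mulmxBr; mxlin.
have e5 : - (Abar g *m (xb - yb)) + Llam g *m (xz - yz) + invmx (etam g) *m (xl - yl) - al
     - (- (Abar g *m yb) + Llam g *m yz)
   = invmx (etam g) *m ((xl + etam g *m (Abar g *m (2%:R *: yb - xb)
             - Llam g *m (2%:R *: yz - xz) - al)) - yl).
  mxdist; rewrite !mulmxA mulVmx ?etaU // !mul1mx; mxlin.
have h2 := eq_sub0 e2; rewrite unit_eq ?upsU // in h2.
have h3 := eq_sub0 e3; rewrite unit_eq ?rhoU // mulmxN in h3.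
have h4 := eq_sub0 e4; rewrite unit_eq ?deltaU // in h4.
split.
- case=> nb [nl [Hb [Hl /mkom_eq [q1 q2 q3 q4 q5]]]].
  have {}q1 := proj1 (eq_shift e1 nb) q1; rewrite -[X in _ = X]addrA in q5.
  have {}q5 := proj1 (eq_shift e5 nl) q5.
  by split; [rewrite -q1 | apply/h2 | apply/h3 | apply/h4 | rewrite -q5].
- case=> Hb q2 q3 q4 Hl; do 2 eexists; split; [exact: Hb | split; [exact: Hl|]].
  apply/mkom_eq; split; [by apply/(eq_shift e1 _) | by apply/h2 | by apply/h3 | by apply/h4 |].
  by rewrite -[X in _ = X]addrA; apply/(eq_shift e5 _).
Qed.
Hypothesis lohi : bloD g < bhiD g.

Lemma colv_eq n (f : 'I_n -> R) (y y' : 'cV[R]_n) :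
  (forall i, y i 0 = f i) -> (forall i, y' i 0 = f i) -> y = y'.
Proof. by move=> h h'; apply/matrixP => i j; rewrite (ord1 j) h h'. Qed.

Lemma Ti_diag : invmx (taum g) = diagv (fun i => (tauD g i)^-1).
Proof. by case: (diagv_inv (f := tauD g)) => // i; rewrite gt_eqF. Qed.
Lemma Ei_diag : invmx (etam g) = diagv (fun k : 'I_(N * M N H) => (etaD g (mxtens_unindex k).1)^-1).
Proof.
rewrite /etam kron_diagv.
by case: (diagv_inv (f := fun k : 'I_(N * M N H) => etaD g (mxtens_unindex k).1)) => // i; rewrite gt_eqF.
Qed.

Lemma projOm w y : is_proj (Omega g) w y <-> forall i, y i 0 = clampB (bloD g) (bhiD g) (w i 0).
Proof.
apply: (@proj_coord R (PB (bloD g) (bhiD g))) => *.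
- by apply: clB_P; rewrite ltW.
- by apply: clB_min1.
- by apply: clB_min2.
Qed.

Lemma ncOm w y : normal_cone (Omega g) y (invmx (taum g) *m (w - y)) <->
   forall i, y i 0 = clampB (bloD g) (bhiD g) (w i 0).
Proof.
rewrite Ti_diag; apply: (@nc_diag R (PB (bloD g) (bhiD g))) => *.
- by apply: clB_P; rewrite ltW.
- by apply: clB_nc; rewrite ?ltW.
- by rewrite invr_gt0.
Qed.

Lemma projNN (w y : 'cV[R]_(N * M N H)) : is_proj (@nonneg R _) w y <-> forall i, y i 0 = clamp0 (w i 0).
Proof.
apply: (@proj_coord R (@P0 R)) => *.
- by apply: cl0_P.
- by apply: cl0_min1.
- by apply: cl0_min2.
Qed.

Lemma ncNN (w y : 'cV[R]_(N * M N H)) : normal_cone (@nonneg R _) y (invmx (etam g) *m (w - y)) <->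
   forall i, y i 0 = clamp0 (w i 0).
Proof.
rewrite Ei_diag; apply: (@nc_diag R (@P0 R)) => *.
- by apply: cl0_P.
- by apply: cl0_nc.
- by rewrite invr_gt0.
Qed.

Lemma Phi_unit : posdef (Phi g) -> Phi g \in unitmx.
Proof.
move=> pd; rewrite -row_free_unit; apply: inj_row_free => v hv.
apply/eqP; apply: contraT => nz.
have : v^T != 0 by rewrite -trmx0 (inj_eq trmx_inj).
move/pd; rewrite trmxK hv mul0mx mxE ltxx //.
Qed.

Lemma Vrel_iff x y : Phi g \in unitmx -> (Vrel g x y <-> Bop g y (Phi g *m (x - y))).
Proof.
move=> u; split.
- case=> v [hv ->]; by rewrite addrC addKr mulmxA mulmxV // mul1mx.
- move=> h; exists (Phi g *m (x - y)); split => //.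
  by rewrite mulmxA mulVmx // mul1mx addrC subrK.
Qed.

Lemma mkom0 : mkom (0 : 'cV[R]_N) 0 0 (0 : 'cV[R]_(N * M N H)) 0 = 0.
Proof. by rewrite /mkom !col_mx0. Qed.

Lemma omE be ps si z la :
  (om_beta (mkom be ps si z la) = be) * (om_psi (mkom be ps si z la) = ps) *
  (om_sigma (mkom be ps si z la) = si) * (om_z (mkom be ps si z la) = z) *
  (om_lambda (mkom be ps si z la) = la).
Proof. by case: (om_mkom be ps si z la) => -> -> -> -> ->. Qed.

Lemma part_i : posdef (Phi g) -> forall x, exists! y, Vrel g x y.
Proof.
move=> pd x; have u := Phi_unit pd.
have key : forall y, Vrel g x y <->
  Bop g (mkom (om_beta y) (om_psi y) (om_sigma y) (om_z y) (om_lambda y))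
    (Phi g *m (mkom (om_beta x) (om_psi x) (om_sigma x) (om_z x) (om_lambda x)
       - mkom (om_beta y) (om_psi y) (om_sigma y) (om_z y) (om_lambda y)) - mkom 0 0 0 0 0).
  by move=> y; rewrite Vrel_iff // mkom0 subr0 -!mkom_split.
set xb := om_beta x; set xp := om_psi x; set xs := om_sigma x; set xz := om_z x; set xl := om_lambda x.
pose yb := \col_i clampB (bloD g) (bhiD g) ((xb - taum g *m (0 + (Abar g)^T *m xl)) i 0).
pose yp := xp + upsm g *m (Lsig g *m xs - 0).
pose ys := xs - rhom g *m (0 + Lsig g *m (2%:R *: yp - xp)).
pose yz := xz + deltam g *m (Llam g *m xl - 0).
pose yl := \col_i clamp0 ((xl + etam g *m (Abar g *m (2%:R *: yb - xb)
             - Llam g *m (2%:R *: yz - xz) - 0)) i 0).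
exists (mkom yb yp ys yz yl); split.
- apply/key; rewrite !omE; apply/core; split => //.
  + by apply/ncOm => i; rewrite mxE.
  + by apply/ncNN => i; rewrite mxE.
- move=> y' /key/core [h1 h2 h3 h4 h5].
  rewrite (mkom_split y'); apply/mkom_eq.
  have eb : yb = om_beta y'.
    by apply: colv_eq (proj1 (ncOm _ _) h1) => i; rewrite mxE.
  have ep : yp = om_psi y' by rewrite h2.
  have es : ys = om_sigma y' by rewrite h3 -ep.
  have ez : yz = om_z y' by rewrite h4.
  split => //.
  rewrite -eb -ez in h5.
  by apply: colv_eq (proj1 (ncNN _ _) h5) => i; rewrite mxE.
Qed.

Lemma IT_core om om' : IT g om om' <-> Bop g om' (Phi g *m (om - om') - Aop g om).
Proof.
have -> : Bop g om' (Phi g *m (om - om') - Aop g om) <->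
  Bop g (mkom (om_beta om') (om_psi om') (om_sigma om') (om_z om') (om_lambda om'))
    (Phi g *m (mkom (om_beta om) (om_psi om) (om_sigma om) (om_z om) (om_lambda om)
       - mkom (om_beta om') (om_psi om') (om_sigma om') (om_z om') (om_lambda om'))
     - mkom (Fhat g (om_beta om) (om_sigma om)) 0 (kappaD g *: (om_sigma om - om_beta om)) 0
            (dbar g + Llam g *m om_lambda om)).
  by rewrite -!mkom_split.
rewrite /IT /=.
set be := om_beta om; set ps := om_psi om; set si := om_sigma om; set z := om_z om; set la := om_lambda om.
set be' := om_beta om'; set ps' := om_psi om'; set si' := om_sigma om'; set z' := om_z om'; set la' := om_lambda om'.
have e3 : si + rhom g *m (kappaD g *: (be - si) - Lsig g *m (2%:R *: ps' - ps))
   = si - rhom g *m (kappaD g *: (si - be) + Lsig g *m (2%:R *: ps' - ps)).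
  by mxdist; mxlin.
have e5 : la - etam g *m (Llam g *m la + dbar g - Abar g *m (2%:R *: be' - be)
                       + Llam g *m (2%:R *: z' - z))
   = la + etam g *m (Abar g *m (2%:R *: be' - be) - Llam g *m (2%:R *: z' - z)
                       - (dbar g + Llam g *m la)).
  by mxdist; mxlin.
split.
- case=> p1 p2 p3 p4 p5; apply/core; split.
  + by apply/ncOm; apply/projOm.
  + by rewrite subr0.
  + by rewrite -e3.
  + by rewrite subr0.
  + by apply/ncNN; apply/projNN; rewrite -e5.
- move/core => [c1 c2 c3 c4 c5]; split.
  + by apply/projOm; apply/ncOm.
  + by rewrite c2 subr0.
  + by rewrite e3.
  + by rewrite c4 subr0.
  + by rewrite e5; apply/projNN; apply/ncNN.
Qed.

Lemma Uop_iff om om' : Phi g \in unitmx ->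
  (Vrel g (Uop g om) om' <-> Bop g om' (Phi g *m (om - om') - Aop g om)).
Proof.
move=> u; rewrite Vrel_iff // /Uop addrAC mulmxBr mulmxA mulmxV // mul1mx.
by [].
Qed.

Lemma ZAB om : zero_in_AB g om <-> Bop g om (- Aop g om).
Proof.
split.
- case=> v [h e]; have -> : - Aop g om = v.
    by apply/eqP; rewrite eq_sym -addr_eq0 addrC e.
  by [].
- move=> h; exists (- Aop g om); split => //; by rewrite subrr.
Qed.

Lemma part_ii : posdef (Phi g) -> forall om om' : 'cV[R]_(Dim N H),
     Omega g (om_beta om) -> nonneg (om_lambda om) ->
     IT g om om' ->
     Vrel g (Uop g om) om' /\
     (exists v, Bop g om' v /\ Aop g om + v + Phi g *m (om' - om) = 0).
Proof.
move=> pd om om' _ _ /IT_core h; have u := Phi_unit pd; split; first by apply/(Uop_iff om om' u).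
exists (Phi g *m (om - om') - Aop g om); split => //.
by rewrite -(opprB om om') mulmxN (addrC (Aop g om)) subrK subrr.
Qed.

Lemma part_iii : posdef (Phi g) -> forall om : 'cV[R]_(Dim N H),
     (Vrel g (Uop g om) om <-> zero_in_AB g om) /\
     (IT g om om <-> zero_in_AB g om).
Proof.
move=> pd om; have u := Phi_unit pd.
rewrite ZAB Uop_iff // IT_core subrr mulmx0 add0r; by split.
Qed.

End Main.


Section Lap.
Variables (R : realType) (n : nat) (w : 'I_n -> 'I_n -> R).
Hypothesis hw : connected_weighted_graph w.

Lemma lap_mul (x : 'cV[R]_n) i :
  (laplacian w *m x) i 0 = \sum_k w i k * (x i 0 - x k 0).
Proof.
case: hw => sym pos diag conn.
rewrite mxE (bigD1 i) //= [RHS](bigD1 i) //= diag mul0r add0r mxE eqxx.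
rewrite big_distrl /= [RHS](eq_bigr (fun k => w i k * x i 0 - w i k * x k 0)); last first.
  by move=> k _; rewrite mulrBr.
rewrite sumrB -sumrN; congr (_ + _); apply: eq_bigr => k nk.
by rewrite mxE eq_sym (negbTE nk) mulNr.
Qed.

Lemma lap_colsum m : \sum_i laplacian w i m = 0.
Proof.
case: hw => sym pos diag conn.
rewrite (bigD1 m) //= mxE eqxx.
rewrite [X in _ + X](eq_bigr (fun i => - w m i)) ?sumrN ?subrr //.
by move=> i ni; rewrite mxE (negbTE ni) sym.
Qed.

Lemma lap_sum (x : 'cV[R]_n) : \sum_i (laplacian w *m x) i 0 = 0.
Proof.
rewrite (eq_bigr (fun i => \sum_k laplacian w i k * x k 0)); last by move=> i _; rewrite mxE.
rewrite exchange_big /= (eq_bigr (fun k => 0)) ?big1 //.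
by move=> k _; rewrite -big_distrl /= lap_colsum mul0r.
Qed.

Lemma lap_ker (x : 'cV[R]_n) : laplacian w *m x = 0 -> forall i j, x i 0 = x j 0.
Proof.
case: hw => sym pos diag conn => h.
have P0 : \sum_i \sum_k w i k * (x i 0 * (x i 0 - x k 0)) = 0.
  have : \sum_i x i 0 * (laplacian w *m x) i 0 = 0.
    by rewrite big1 // => i _; rewrite h mxE mulr0.
  move=> e; rewrite -[RHS]e; apply: eq_bigr => i _; rewrite lap_mul big_distrr; apply: eq_bigr => k _ /=; ring.
have P1 : \sum_i \sum_k w i k * (x k 0 * (x k 0 - x i 0)) = 0.
  rewrite exchange_big /= -[RHS]P0; apply: eq_bigr => i _; apply: eq_bigr => k _.
  by rewrite sym.
have Q : \sum_i \sum_k w i k * (x i 0 - x k 0) ^+ 2 = 0.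
  rewrite -[RHS](addr0 0) -[X in _ = X + _]P0 -[X in _ = _ + X]P1 -big_split /=.
  apply: eq_bigr => i _; rewrite -big_split /=; apply: eq_bigr => k _; ring.
have Qk : forall i k, w i k * (x i 0 - x k 0) ^+ 2 = 0.
  have T1 : forall i k, 0 <= w i k * (x i 0 - x k 0) ^+ 2.
    by move=> i k; apply: mulr_ge0; [apply: pos | apply: sqr_ge0].
  have T2 : forall i, 0 <= \sum_k w i k * (x i 0 - x k 0) ^+ 2.
    by move=> i; apply: sumr_ge0 => k _.
  have Qi := psumr_eq0P (fun i _ => T2 i) Q.
  move=> i k; have := Qi i isT; move/(psumr_eq0P (fun k0 _ => T1 i k0)); by apply.
have edge : forall k l, 0 < w k l -> x k 0 = x l 0.
  move=> k l wp; have /eqP := Qk k l; rewrite mulf_eq0 gt_eqF //= sqrf_eq0 subr_eq0.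
  by move/eqP.
move=> i j.
have cl : closed (fun k l : 'I_n => 0 < w k l) [pred k | x k 0 == x i 0].
  move=> k l /edge e; by rewrite !inE e.
have := closed_connect cl (conn i j); rewrite !inE eqxx => /esym/eqP.
by move=> ->.
Qed.
End Lap.

Section Game.
Variables (R : realType) (N H : nat) (g : data R N H).
Hypothesis hw : connected_weighted_graph (wD g).
Hypothesis N2 : (2 <= N)%N.

Lemma sum_tens m n (F : 'I_(m * n) -> R) :
  \sum_k F k = \sum_i \sum_j F (mxtens_index (i, j)).
Proof.
rewrite pair_big /= (reindex (@mxtens_index m n)) /=; last first.
  by exists (@mxtens_unindex m n) => x _; rewrite (mxtens_indexK, mxtens_unindexK).
by apply: eq_bigr => -[i j].
Qed.

Lemma LlamE n j m j' :
  Llam g (mxtens_index (n, j)) (mxtens_index (m, j')) = Lsig g n m * (j == j')%:R.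
Proof. by rewrite /Llam (@tensmxE _ N N (M N H) (M N H) (Lsig g) 1%:M n j m j'); congr (_ * _); rewrite mxE. Qed.

Lemma Llam_entry (la : 'cV[R]_(N * M N H)) n j :
  (Llam g *m la) (mxtens_index (n, j)) 0 = \sum_m Lsig g n m * la (mxtens_index (m, j)) 0.
Proof.
rewrite mxE sum_tens; apply: eq_bigr => m _.
rewrite (bigD1 j) //= big1 ?addr0; first by rewrite LlamE eqxx mulr1.
by move=> j' nj; rewrite LlamE eq_sym (negbTE nj) mulr0 mul0r.
Qed.

Lemma Abar_entry (be : 'cV[R]_N) n j :
  (Abar g *m be) (mxtens_index (n, j)) 0 = Atil g j n * be n 0.
Proof.
rewrite mxE (bigD1 n) //= big1 ?addr0; first by rewrite mxE mxtens_indexK /= eqxx.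
by move=> m nm; rewrite mxE mxtens_indexK /= eq_sym (negbTE nm) mul0r.
Qed.

Lemma AbarT_entry (la : 'cV[R]_(N * M N H)) n :
  ((Abar g)^T *m la) n 0 = \sum_j Atil g j n * la (mxtens_index (n, j)) 0.
Proof.
rewrite mxE sum_tens (bigD1 n) //= [X in _ + X]big1 ?addr0.
  by apply: eq_bigr => j _; rewrite !mxE mxtens_indexK /= eqxx.
move=> m nm; apply: big1 => j _.
by rewrite !mxE mxtens_indexK /= (negbTE nm) mul0r.
Qed.

Lemma dbar_entry n j : dbar g (mxtens_index (n, j)) 0 = dloc g n j 0.
Proof. by rewrite mxE mxtens_indexK. Qed.

Lemma Llam_colsum (z : 'cV[R]_(N * M N H)) j :
  \sum_n (Llam g *m z) (mxtens_index (n, j)) 0 = 0.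
Proof.
rewrite (eq_bigr (fun n => \sum_m Lsig g n m * z (mxtens_index (m, j)) 0)); last first.
  by move=> n _; rewrite Llam_entry.
rewrite exchange_big /= big1 // => m _.
by rewrite -big_distrl /= lap_colsum // mul0r.
Qed.

Lemma sum_col m1 m2 (F : 'I_N -> 'cV[R]_m1) (G : 'I_N -> 'cV[R]_m2) :
  \sum_n col_mx (F n) (G n) = col_mx (\sum_n F n) (\sum_n G n).
Proof.
by elim/big_rec3: _ => [|i x y z _ ->]; rewrite ?col_mx0 ?add_col_mx.
Qed.

Lemma Nnz : (N%:R : R) != 0.
Proof. by rewrite pnatr_eq0 -lt0n (leq_trans _ N2). Qed.

Lemma sum_dloc : \sum_n dloc g n = dvec g.
Proof.
rewrite /dloc big_split /= sumr_const card_ord scalerMnl.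
rewrite !sum_col big1_eq.
have ex : \sum_n xhatD g n 0 *: uvec R n = xhatD g.
  rewrite [RHS]matrix_sum_delta; apply: eq_bigr => i _; by rewrite big_ord1.
have ee : \sum_n eD g n 0 *: uvec R n = eD g.
  rewrite [RHS]matrix_sum_delta; apply: eq_bigr => i _; by rewrite big_ord1.
have -> : \sum_n - (eD g n 0 *: (PiD g *m uvec R n)) = - (PiD g *m eD g).
  by rewrite sumrN; congr (- _); rewrite -[in RHS]ee mulmx_sumr; apply: eq_bigr => n _; rewrite scalemxAr.
have -> : \sum_n eD g n 0 *: (PiD g *m uvec R n) = PiD g *m eD g.
  by rewrite -[in RHS]ee mulmx_sumr; apply: eq_bigr => n _; rewrite scalemxAr.
rewrite ex -mulr_natr mulVf ?Nnz // scale1r /dvec !add_col_mx addr0 !mulmxBr.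
congr col_mx; first by rewrite addrC.
congr col_mx; congr col_mx.
  by rewrite opprB addrA addrAC.
by rewrite addrA addrAC.
Qed.
End Game.


Lemma mxDE (R : realType) m n (A B : 'M[R]_(m, n)) i j : (A + B) i j = A i j + B i j.
Proof. by rewrite mxE. Qed.
Lemma mxNE (R : realType) m n (A : 'M[R]_(m, n)) i j : (- A) i j = - A i j.
Proof. by rewrite mxE. Qed.

Section IV.
Variables (R : realType) (N H : nat) (g : data R N H).
Hypothesis hw : connected_weighted_graph (wD g).
Hypothesis N2 : (2 <= N)%N.
Hypothesis kpos : 0 < kappaD g.

Lemma Fmap_Fhat (be : 'cV[R]_N) :
  Fmap g be = Fhat g be (((N%:R)^-1 * \sum_i be i 0) *: onev R N).
Proof.
apply/matrixP => i j; rewrite !mxE.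
have eN : N%:R * ((N%:R)^-1 * (\sum_i be i 0) * 1) = \sum_i be i 0.
  by rewrite mulr1 mulrA mulfV ?Nnz // mul1r.
by rewrite eN.
Qed.

Lemma part_iv (om : 'cV[R]_(Dim N H)) : zero_in_AB g om ->
     om_sigma om = ((N%:R)^-1 * \sum_i om_beta om i 0) *: onev R N /\
     (exists gam : 'cV[R]_(M N H), nonneg gam /\ om_lambda om = kron (onev R N) gam) /\
     vGNE g (om_beta om).
Proof.
move/ZAB; rewrite /Bop /Aop /=.
set be := om_beta om; set ps := om_psi om; set si := om_sigma om; set z := om_z om; set la := om_lambda om.
case=> nb [nl [Hb [Hl]]]; rewrite mkomN => /mkom_eq [c1 c2 c3 c4 c5].
have Lsi : Lsig g *m si = 0 by apply: oppr_inj; rewrite -c2 !oppr0.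
have Lla : Llam g *m la = 0 by apply: oppr_inj; rewrite -c4 !oppr0.
pose i0 : 'I_N := Ordinal (ltnW N2).
set S := \sum_i be i 0.
have sic := lap_ker hw Lsi.
have hs : \sum_i (si i 0 - be i 0) = 0.
  have : \sum_i (Lsig g *m ps) i 0 = 0 by apply: lap_sum.
  rewrite -c3 => e.
  have : kappaD g * \sum_i (si i 0 - be i 0) = 0.
    transitivity (- \sum_i (- (kappaD g *: (si - be))) i 0); last by rewrite e oppr0.
    rewrite -sumrN mulr_sumr; apply: eq_bigr => i _.
    by rewrite !mxE opprK.
  by move/eqP; rewrite mulf_eq0 gt_eqF //= => /eqP.
have si0 : si i0 0 = (N%:R)^-1 * S.
  move: hs; rewrite sumrB (eq_bigr (fun _ => si i0 0)); last by move=> i _; rewrite (sic i i0).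
  rewrite sumr_const card_ord -/S => /eqP; rewrite subr_eq0 => /eqP <-.
  by rewrite -(mulr_natl (si i0 0) N) mulKf ?Nnz.
have siE : si = ((N%:R)^-1 * S) *: onev R N.
  by apply/matrixP => i j; rewrite (ord1 j) (sic i i0) si0 !mxE mulr1.
split => //.
have lac : forall j n, la (mxtens_index (n, j)) 0 = la (mxtens_index (i0, j)) 0.
  move=> j n; pose v := \col_m la (mxtens_index (m, j)) 0.
  have Lv : Lsig g *m v = 0.
    apply/matrixP => k c; rewrite (ord1 c) mxE.
    rewrite (eq_bigr (fun m => Lsig g k m * la (mxtens_index (m, j)) 0)); last by move=> m _; rewrite [v _ _]mxE.
    by rewrite -Llam_entry Lla !mxE.
  have := lap_ker hw Lv n i0; by rewrite !mxE.
pose gam := \col_j la (mxtens_index (i0, j)) 0.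
have [Pla Hnl] := proj1 (@nc_coord R _ (fun t => 0 <= t) la nl) Hl.
have nlneg : forall k, nl k 0 <= 0.
  by move=> k; have := Hnl k (la k 0 + 1); rewrite addrAC subrr add0r mulr1; apply; apply: addr_ge0 (Pla k) ler01.
have nlla : forall k, nl k 0 * la k 0 = 0.
  move=> k; have := Hnl k 0 (lexx 0); have := nlneg k; have := Pla k; nra.
have laE : forall n j, la (mxtens_index (n, j)) 0 = gam j 0.
  by move=> n j; rewrite lac [gam _ _]mxE.
split.
  exists gam; split; first by move=> j; rewrite mxE; apply: Pla.
  apply/matrixP => k c; rewrite -(mxtens_unindexK k); case: (mxtens_unindex k) => n j.
  by rewrite (ord1 c) laE !mxE mxtens_indexK /= mul1r.
have Omb := Hb.1.
rewrite Lla addr0 in c5.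
have ent : forall n j, - dloc g n j 0 = nl (mxtens_index (n, j)) 0 - Atil g j n * be n 0
                                  + (Llam g *m z) (mxtens_index (n, j)) 0.
  move=> n j; have e := congr1 (fun X : 'cV[R]_(N * M N H) => X (mxtens_index (n, j)) 0) c5; simpl in e.
  by rewrite !mxDE !mxNE Abar_entry dbar_entry in e.
have F1 : forall j, (Atil g *m be) j 0 = dvec g j 0 + \sum_n nl (mxtens_index (n, j)) 0.
  move=> j.
  have : \sum_n - dloc g n j 0 = \sum_n (nl (mxtens_index (n, j)) 0 - Atil g j n * be n 0
                                  + (Llam g *m z) (mxtens_index (n, j)) 0).
    by apply: eq_bigr => n _; apply: ent.
  rewrite sumrN !big_split /= sumrN (Llam_colsum hw z j) addr0.
  have -> : \sum_n dloc g n j 0 = dvec g j 0 by rewrite -(sum_dloc g N2) summxE.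
  have -> : \sum_n Atil g j n * be n 0 = (Atil g *m be) j 0 by rewrite mxE.
  move=> h; lra.
have F2 : forall j, gam j 0 * \sum_n nl (mxtens_index (n, j)) 0 = 0.
  move=> j; rewrite mulr_sumr big1 // => n _.
  by rewrite -(laE n j) mulrC nlla.
have gam0 : forall j, 0 <= gam j 0 by move=> j; rewrite -(laE i0 j); apply: Pla.
split.
  split => // j; rewrite F1; have : \sum_n nl (mxtens_index (n, j)) 0 <= 0.
    by apply: sumr_le0 => n _; apply: nlneg.
  lra.
move=> be' [Ob' Kb'].
rewrite Fmap_Fhat -/S -siE.
have Fh : Fhat g be si = - (nb + (Abar g)^T *m la) by rewrite -c1 opprK.
rewrite Fh dot_sum.
have T1 := Hb.2 be' Ob'; rewrite dot_sum in T1.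
have -> : \sum_n (be' - be) n 0 * (- (nb + (Abar g)^T *m la)) n 0 =
   - \sum_n nb n 0 * (be' - be) n 0 - \sum_n (be' - be) n 0 * ((Abar g)^T *m la) n 0.
  rewrite -sumrN -sumrB; apply: eq_bigr => n _; rewrite !mxNE !mxDE !mxNE; ring.
have T2 : \sum_n (be' - be) n 0 * ((Abar g)^T *m la) n 0 <= 0.
  rewrite (eq_bigr (fun n => \sum_j (be' - be) n 0 * (Atil g j n * gam j 0))); last first.
    by move=> n _; rewrite AbarT_entry mulr_sumr; apply: eq_bigr => j _; rewrite laE.
  rewrite exchange_big /=; apply: sumr_le0 => j _.
  have -> : \sum_n (be' - be) n 0 * (Atil g j n * gam j 0) =
            gam j 0 * \sum_n Atil g j n * (be' - be) n 0.
    by rewrite mulr_sumr; apply: eq_bigr => n _; ring.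
  have -> : \sum_n Atil g j n * (be' - be) n 0 = (Atil g *m be') j 0 - (Atil g *m be) j 0.
    rewrite [(Atil g *m be') j 0]mxE [(Atil g *m be) j 0]mxE -sumrB.
    by apply: eq_bigr => n _; rewrite mxDE mxNE; ring.
  rewrite F1 opprD addrA mulrDr mulrN F2 subr0.
  apply: mulr_ge0_le0 => //; rewrite subr_le0; exact: Kb'.
lra.
Qed.
End IV.

Theorem theorem1 (R : realType) (N H : nat) (g : data R N H) :
  (2 <= N)%N -> (1 <= H)%N ->
  0 <= rD g -> 0 < alphaD g ->
  (forall n, 0 < aD g n) -> (forall n, 0 < bD g n) ->
  bloD g < bhiD g ->
  (forall h, 0 <= fhatD g h 0) ->
  slater g ->
  connected_weighted_graph (wD g) ->
  0 < kappaD g ->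
  (forall n, 0 < tauD g n) -> (forall n, 0 < upsD g n) -> (forall n, 0 < rhoD g n) ->
  (forall n, 0 < deltaD g n) -> (forall n, 0 < etaD g n) ->
  posdef (Phi g) ->
  (* (i) V_Phi is single-valued on the whole space *)
  (forall x : 'cV[R]_(Dim N H), exists! y, Vrel g x y)
  /\
  (* (ii) one step of (IT) is omega^{k+1} = V_Phi (U_Phi omega^k) *)
  (forall om om' : 'cV[R]_(Dim N H),
     Omega g (om_beta om) -> nonneg (om_lambda om) ->
     IT g om om' ->
     Vrel g (Uop g om) om' /\
     (exists v, Bop g om' v /\ Aop g om + v + Phi g *m (om' - om) = 0))
  /\
  (* (iii) fixed points of V_Phi o U_Phi = steady states of (IT) = zeros of A + B *)
  (forall om : 'cV[R]_(Dim N H),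
     (Vrel g (Uop g om) om <-> zero_in_AB g om) /\
     (IT g om om <-> zero_in_AB g om))
  /\
  (* (iv) zeros of A + B yield consensus and a v-GNE *)
  (forall om : 'cV[R]_(Dim N H),
     zero_in_AB g om ->
     om_sigma om = ((N%:R)^-1 * \sum_i om_beta om i 0) *: onev R N /\
     (exists gam : 'cV[R]_(M N H),
        nonneg gam /\ om_lambda om = kron (onev R N) gam) /\
     vGNE g (om_beta om)).
Proof.
move=> N2 _ _ _ _ _ lohi _ _ hw kpos tp up rp dp ep pd.
split; first exact: (part_i tp up rp dp ep lohi pd).
split; first exact: (part_ii tp up rp dp ep lohi pd).
split; first exact: (part_iii tp up rp dp ep lohi pd).
exact: (part_iv hw N2 kpos).
Qed.
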